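(* Let $G$ be a connected graph with a cut vertex, let $\mathcal B$ and $C$ be the sets of blocks and cut vertices of $G$, respectively, and let $T$ be the block tree of $G$. Then $G$ is $1$-perfectly orientable if and only if one of the following conditions holds: (1) There exists a block $B_r$ of $G$ such that $B_r$ is $1$-perfectly orientable and for every arc $(B,v)\in\mathcal B\times C$ of the $B_r$-rooted orientation of $T$, the rooted graph $B^v$ is $1$-perfectly orientable. (2) There exists a cut vertex $v_r$ of $G$ such that for every arc $(B,v)\in\mathcal B\times C$ of the $v_r$-rooted orientation of $T$, the rooted graph $B^v$ is $1$-perfectly orientable.
   Context: All graphs are finite and simple. An orientation of $G$ is $1$-perfect if for every vertex the out-neighborhood is a clique in $G$; $G$ is $1$-perfectly orientable if it has a $1$-perfect orientation. A sink is a vertex of out-degree $0$. A rooted graph $B^v$ is a pair $(B,v)$ with $v\in V(B)$; it is $1$-perfectly orientable if $B$ has a $1$-perfect orientation in which $v$ is a sink. A graph is biconnected if it is connected and has no cut vertex; a block is a maximal biconnected subgraph. The block tree $T$ of a connected graph $G$ has vertex set $\mathcal B\cup C$, with a block $B$ adjacent to a cut vertex $v$ iff $v\in V(B)$. For a tree $T$ and a vertex $r$ of $T$, the $r$-rooted orientation of $T$ is the orientation in which every edge $\{x,y\}$ is oriented $x\to y$ iff $d_T(y,r)<d_T(x,r)$ (all edges point towards $r$). *)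

(* Defs.v *)
(* simple graphs as symmetric irreflexive relations on a finType. *)
From mathcomp Require Import all_boot.
Set Implicit Arguments. Unset Strict Implicit. Unset Printing Implicit Defensive.

Section Graphs.
Variable T : finType.
Variable e : rel T.

Definition induced (S : {set T}) : rel T :=
  [rel x y | [&& e x y, x \in S & y \in S]].

Definition connectedb (S : {set T}) : bool :=
  (S != set0) && [forall x in S, forall y in S, connect (induced S) x y].

Definition cut_vertexb (S : {set T}) (v : T) : bool :=
  (v \in S) &&
  [exists x in S :\ v, exists y in S :\ v, ~~ connect (induced (S :\ v)) x y].

Definition biconnectedb (S : {set T}) : bool :=
  connectedb S && [forall v in S, ~~ cut_vertexb S v].

(* blocks = maximal biconnected subgraphs; a maximal biconnected subgraph is
   always induced, so it is represented by its vertex set *)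
Definition blockb (B : {set T}) : bool :=
  biconnectedb B && [forall S : {set T}, (B \subset S) && biconnectedb S ==> (S == B)].

Definition orientation_of (S : {set T}) (D : rel T) : Prop :=
  (forall x y, D x y -> induced S x y) /\
  (forall x y, induced S x y -> D x y != D y x).

Definition one_perfect (D : rel T) : Prop :=
  forall x y z, D x y -> D x z -> y != z -> e y z.

Definition one_perfectly_orientable_on (S : {set T}) : Prop :=
  exists D : rel T, orientation_of S D /\ one_perfect D.

(* rooted graph G[B]^v is 1-perfectly orientable: 1-perfect orientation of G[B]
   in which v is a sink *)
Definition rooted_one_perfectly_orientable (B : {set T}) (v : T) : Prop :=
  exists D : rel T, [/\ orientation_of B D, one_perfect D & forall y, ~~ D v y].

(* nodes: inl B for blocks B, inr v for cut vertices v *)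
Definition btnode := ({set T} + T)%type.

Definition bt_adj : rel btnode := fun a b =>
  match a, b with
  | inl B, inr v | inr v, inl B =>
      [&& blockb B, cut_vertexb setT v & v \in B]
  | _, _ => false
  end.

Fixpoint within (r : btnode) (k : nat) (x : btnode) : bool :=
  match k with
  | 0 => x == r
  | k'.+1 => within r k' x || [exists y, bt_adj x y && within r k' y]
  end.

(* distance d_T(x, r) (the block tree is connected, so any node is within
   #|btnode| steps of r) *)
Definition bt_dist (r x : btnode) : nat :=
  find (fun k => within r k x) (iota 0 #|{: {set T} + T}|.+1).

Definition rooted_arc (r a b : btnode) : bool :=
  bt_adj a b && (bt_dist r b < bt_dist r a).

End Graphs.

(* Main.v *)
Require Import Defs.
From mathcomp Require Import all_boot zify.
From Stdlib Require Import ClassicalEpsilon.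
Set Implicit Arguments. Unset Strict Implicit. Unset Printing Implicit Defensive.

Lemma nat_a m n : m <= n.+1 -> n <= m.+1 -> m != n -> m = n.+1 \/ n = m.+1.
Proof. move=> *; lia. Qed.
Lemma nat_b k : k.+2 <= k -> False.
Proof. move=> *; lia. Qed.
Lemma nat_c k : k = k.+2 -> False.
Proof. move=> *; lia. Qed.

Section Main.
Variable T : finType.
Variable e : rel T.
Hypothesis e_sym : symmetric e.
Hypothesis e_irr : irreflexive e.

Implicit Types (A X S B : {set T}) (x y v w a b : T).
Local Notation ind := (induced e).
Local Notation conn A := (connect (induced e A)).

Lemma ind_sym A : symmetric (ind A).
Proof. by move=> x y; rewrite /induced /= e_sym; case: (e y x); case: (x \in A); case: (y \in A). Qed.

Lemma conn_symE A x y : conn A x y = conn A y x.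
Proof. exact: (sym_connect_sym (ind_sym A)). Qed.

Lemma conn_sub A A' : A \subset A' -> forall x y, conn A x y -> conn A' x y.
Proof.
move=> sAA'; apply: connect_sub => x y /and3P[exy xA yA]; apply: connect1.
by rewrite /induced /= exy !(subsetP sAA').
Qed.

Lemma conn_edge A x y : e x y -> x \in A -> y \in A -> conn A x y.
Proof. by move=> exy xA yA; apply: connect1; rewrite /induced /= exy xA yA. Qed.

Lemma path_in A x p : path (ind A) x p -> forall u, u \in p -> u \in A.
Proof.
elim: p x => [|c p IH] x //= /andP[/and3P[_ _ cA] pth] u.
rewrite inE => /orP[/eqP->|] //; exact: IH pth u.
Qed.

Lemma conn_in A x y : conn A x y -> x != y -> (x \in A) /\ (y \in A).
Proof.
case/connectP=> [[|c p]] /=; first by move=> _ ->; rewrite eqxx.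
move=> /andP[/and3P[_ xA cA] pth] -> _; split=> //.
have: last c p \in c :: p by apply: mem_last.
rewrite inE => /orP[/eqP->|] //; exact: path_in pth _.
Qed.

Lemma hub_connected A h : h \in A -> (forall x, x \in A -> conn A x h) -> connectedb e A.
Proof.
move=> hA H; rewrite /connectedb; apply/andP; split; first by apply/set0Pn; exists h.
apply/forallP=> x; apply/implyP=> xA; apply/forallP=> y; apply/implyP=> yA.
by apply: connect_trans (H x xA) _; rewrite conn_symE; apply: H.
Qed.

Lemma bic_intro A : connectedb e A ->
  (forall w x y, w \in A -> x \in A :\ w -> y \in A :\ w -> conn (A :\ w) x y) ->
  biconnectedb e A.
Proof.
move=> cA H; rewrite /biconnectedb cA /=; apply/forallP=> w; apply/implyP=> wA.
apply/negP=> /andP[_ /existsP[x /andP[xA /existsP[y /andP[yA]]]]].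
by rewrite H.
Qed.

Lemma bic_conn A x y : biconnectedb e A -> x \in A -> y \in A -> conn A x y.
Proof.
case/andP=> /andP[_ /forallP H] _ xA yA.
by move: (H x); rewrite xA /= => /forallP/(_ y); rewrite yA.
Qed.

Lemma bic_minus A v x y : biconnectedb e A -> x \in A -> y \in A -> x != v -> y != v ->
  conn (A :\ v) x y.
Proof.
move=> bA xA yA xv yv.
case vA: (v \in A).
  case/andP: bA => _ /forallP/(_ v); rewrite vA /= /cut_vertexb vA /= negb_exists.
  move=> /forallP/(_ x); rewrite in_setD1 xv xA /= negb_exists => /forallP/(_ y).
  by rewrite in_setD1 yv yA /= negbK.
apply: conn_sub (bic_conn bA xA yA).
apply/subsetP=> u uA; rewrite in_setD1 uA andbT; apply/eqP=> uv.
by rewrite -uv uA in vA.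
Qed.

Lemma block_bic B : blockb e B -> biconnectedb e B.
Proof. by case/andP. Qed.

Lemma block_max B S : blockb e B -> B \subset S -> biconnectedb e S -> S = B.
Proof. by case/andP=> _ /forallP/(_ S) /implyP H sBS bS; apply/eqP/H; rewrite sBS. Qed.

Lemma bic_block S : biconnectedb e S -> exists B, blockb e B /\ S \subset B.
Proof.
move=> bS.
case: (@arg_maxnP _ S (fun S' => (S \subset S') && biconnectedb e S') (fun S' => #|S'|)).
  by rewrite subxx.
move=> B /andP[sSB bB] Bmax; exists B; split=> //.
rewrite /blockb bB /=; apply/forallP=> S'; apply/implyP=> /andP[sBS' bS'].
rewrite eq_sym eqEcard sBS' /=; apply: Bmax; rewrite bS' andbT.
exact: subset_trans sSB sBS'.
Qed.

Lemma bic1 v : biconnectedb e [set v].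
Proof.
apply: bic_intro.
  by apply: (@hub_connected _ v) => [|x]; rewrite ?inE // => /eqP->.
by move=> w x y _; rewrite !inE => /andP[_ /eqP->] /andP[_ /eqP->].
Qed.

Lemma bic2 x y : e x y -> biconnectedb e [set x; y].
Proof.
move=> exy; apply: bic_intro.
  apply: (@hub_connected _ x); first by rewrite !inE eqxx.
  move=> z; rewrite !inE => /orP[/eqP->|/eqP->] //.
  by apply: conn_edge; rewrite ?inE ?eqxx ?orbT // e_sym.
move=> w a b; rewrite !inE.
by case/orP=> /eqP->; case/andP=> naw /orP[]/eqP aE; case/andP=> nbw /orP[]/eqP bE;
  subst; rewrite ?eqxx in naw nbw *.
Qed.


Lemma conn_neq A z u w : conn (A :\ w) z u -> u != w -> z != w.
Proof.
move=> c uw; case: (eqVneq z u) => [->|zu] //.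
by case: (conn_in c zu); rewrite in_setD1 => /andP[].
Qed.

Lemma path_all_conn A A' a p : path (ind A) a p ->
  (forall u, u \in a :: p -> u \in A') -> forall u, u \in a :: p -> conn A' a u.
Proof.
elim: p a => [|c p IH] a /=.
  by move=> _ _ u; rewrite inE => /eqP->.
move=> /andP[/and3P[eac _ _] pth] HA u; rewrite inE => /orP[/eqP->|uin] //.
have HA' : forall u, u \in c :: p -> u \in A' by move=> z zin; apply: HA; rewrite inE zin orbT.
apply: connect_trans (IH c pth HA' u uin).
by apply: conn_edge eac (HA a _) (HA c _); rewrite !inE eqxx ?orbT.
Qed.

Lemma path_pieces A X w a p : path (ind A) a p -> uniq (a :: p) ->
  (forall u, u \in a :: p -> u \in X) -> forall u, u \in a :: p -> u != w ->
  conn (X :\ w) a u \/ conn (X :\ w) u (last a p).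
Proof.
elim: p a => [|c p IH] a /=.
  by move=> _ _ _ u; rewrite inE => /eqP-> _; left.
move=> /andP[/and3P[eac _ _] pth] /andP[anin up] HX u.
rewrite inE => /orP[/eqP->|uin] uw; first by left.
have HX' : forall u, u \in c :: p -> u \in X by move=> z zin; apply: HX; rewrite inE zin orbT.
case: (IH c pth up HX' u uin uw) => [cu|uc]; last by right.
case: (eqVneq a w) => [aw|aw].
  right; have Hall : forall z, z \in c :: p -> z \in X :\ w.
    move=> z zin; rewrite in_setD1 HX' // andbT; apply/eqP=> zw.
    by move: anin; rewrite aw -zw zin.
  have h1 := path_all_conn pth Hall uin.
  have h2 := path_all_conn pth Hall (mem_last c p).
  by rewrite conn_symE in h1; apply: connect_trans h1 h2.
have cw := conn_neq cu uw.
left; apply: connect_trans cu; apply: conn_edge eac _ _.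
  by rewrite in_setD1 aw HX // inE eqxx.
by rewrite in_setD1 cw HX'// inE eqxx.
Qed.

Hypothesis nbr : forall x, exists y, e x y.

Lemma block_other B v : blockb e B -> exists a, a \in B /\ a != v.
Proof.
move=> bl; case: (pickP (fun a => (a \in B) && (a != v))) => [a /andP[aB av]|H].
  by exists a.
exfalso; have [c evc] := nbr v.
have sB : B \subset [set v; c].
  apply/subsetP=> u uB; move: (H u); rewrite uB /= => /negbFE/eqP->.
  by rewrite !inE eqxx.
have E := block_max bl sB (bic2 evc).
have : c \in B by rewrite -E !inE eqxx orbT.
move=> cB; move: (H c); rewrite cB /= => /negbFE/eqP cv.
by move: evc; rewrite cv e_irr.
Qed.

Lemma sep B1 B2 v a b : blockb e B1 -> blockb e B2 -> B1 != B2 -> v \in B1 -> v \in B2 ->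
  a \in B1 -> b \in B2 -> a != v -> b != v -> ~~ conn (setT :\ v) a b.
Proof.
move=> bl1 bl2 neq vB1 vB2 aB1 bB2 av bv; apply/negP => /connectP[p0 pth0 eb].
move: bB2 bv; rewrite eb => {eb b}.
case: (shortenP pth0) => p pth up _ bB2 bv.
set b := last a p in bB2 bv.
set X := B1 :|: B2 :|: [set u | u \in a :: p].
have pX : forall u, u \in a :: p -> u \in X.
  by move=> u uin; rewrite /X !in_setU in_set uin orbT.
have pv : forall u, u \in a :: p -> u != v.
  move=> u; rewrite inE => /orP[/eqP->//|uin].
  by move: (path_in pth uin); rewrite in_setD1 => /andP[].
have b1 := block_bic bl1; have b2 := block_bic bl2.
have s1 : B1 \subset X by rewrite /X -setUA subsetUl.
have s2 : B2 \subset X by rewrite /X (setUC B1) -setUA subsetUl.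
have bX : biconnectedb e X.
  apply: bic_intro.
    apply: (@hub_connected _ v); first by rewrite (subsetP s1).
    move=> x; rewrite /X !in_setU in_set -/X => /orP[/orP[]|] xin.
    - exact (conn_sub s1 (bic_conn b1 xin vB1)).
    - exact (conn_sub s2 (bic_conn b2 xin vB2)).
    - refine (connect_trans _ (conn_sub s1 (bic_conn b1 aB1 vB1))).
      by rewrite conn_symE; apply: path_all_conn pth pX _ xin.
  move=> w x y wX xXw yXw.
  suff H : exists h, forall z, z \in X :\ w -> conn (X :\ w) z h.
    by case: H => h H; apply: connect_trans (H x xXw) _; rewrite conn_symE; apply: H.
  case: (eqVneq w v) => [->|wv].
    exists a => z; rewrite in_setD1 => /andP[zv].
    have Hall : forall u, u \in a :: p -> u \in X :\ v by move=> u uin; rewrite in_setD1 pv // pX.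
    rewrite /X !in_setU in_set -/X => /orP[/orP[]|] zin.
    - exact (conn_sub (setSD _ s1) (bic_minus b1 zin aB1 zv av)).
    - refine (connect_trans (conn_sub (setSD _ s2) (bic_minus b2 zin bB2 zv bv)) _).
      by rewrite conn_symE; apply: path_all_conn pth Hall _ (mem_last a p).
    - by rewrite conn_symE; apply: path_all_conn pth Hall _ zin.
  exists v => z; rewrite in_setD1 => /andP[zw].
  have vw : v != w by rewrite eq_sym.
  rewrite /X !in_setU in_set -/X => /orP[/orP[]|] zin.
  - exact (conn_sub (setSD _ s1) (bic_minus b1 zin vB1 zw vw)).
  - exact (conn_sub (setSD _ s2) (bic_minus b2 zin vB2 zw vw)).
  - case: (path_pieces pth up pX zin zw) => c.
      have aw := conn_neq c zw.
      rewrite conn_symE in c; apply: connect_trans c _.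
      exact (conn_sub (setSD _ s1) (bic_minus b1 aB1 vB1 aw vw)).
    have c' : conn (X :\ w) b z by rewrite conn_symE.
    have bw := conn_neq c' zw.
    apply: connect_trans c _.
    exact (conn_sub (setSD _ s2) (bic_minus b2 bB2 vB2 bw vw)).
have XB1 := block_max bl1 s1 bX.
have sB2 : B2 \subset B1 by rewrite -XB1.
have := block_max bl2 sB2 b1.
by move=> E; rewrite E eqxx in neq.
Qed.

Lemma share2 B1 B2 x y : blockb e B1 -> blockb e B2 -> x \in B1 -> x \in B2 ->
  y \in B1 -> y \in B2 -> x != y -> B1 = B2.
Proof.
move=> bl1 bl2 x1 x2 y1 y2 xy; apply/eqP/negPn/negP => neq.
have := sep bl1 bl2 neq x1 x2 y1 y2; rewrite eq_sym xy => /(_ isT isT).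
by rewrite connect0.
Qed.

Lemma edge_block x y : e x y -> exists B, [/\ blockb e B, x \in B & y \in B].
Proof.
move=> exy; have [B [bl sB]] := bic_block (bic2 exy).
by exists B; split=> //; apply: (subsetP sB); rewrite !inE eqxx ?orbT.
Qed.

Lemma two_blocks_cut B1 B2 x : blockb e B1 -> blockb e B2 -> B1 != B2 ->
  x \in B1 -> x \in B2 -> cut_vertexb e setT x.
Proof.
move=> bl1 bl2 neq x1 x2.
have [a [aB av]] := block_other x bl1; have [b [bB bv]] := block_other x bl2.
rewrite /cut_vertexb in_setT /=; apply/existsP; exists a.
rewrite in_setD1 av in_setT /=; apply/existsP; exists b.
by rewrite in_setD1 bv in_setT /= (sep bl1 bl2 neq x1 x2 aB bB av bv).
Qed.


Hypothesis Gconn : connectedb e setT.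

Local Notation node := (btnode T).
Local Notation adj := (bt_adj e).
Local Notation NN := #|{: {set T} + T}|.

Definition real (n : node) : bool :=
  match n with inl B => blockb e B | inr v => cut_vertexb e setT v end.
Definition vs (n : node) : {set T} :=
  match n with inl B => B | inr v => [set v] end.
Definition side (n : node) : bool := if n is inl _ then true else false.

Lemma adj_sym : symmetric adj.
Proof. by move=> [B|v] [B'|v']. Qed.

Lemma adj_real (a b : node) : adj a b -> real a /\ real b.
Proof. by case: a b => [B|v] [B'|v'] //= /and3P[-> ->]. Qed.

Lemma adj_side (a b : node) : adj a b -> side a != side b.
Proof. by case: a b => [B|v] [B'|v']. Qed.

Lemma within_S (r x : node) k : within e r k x -> within e r k.+1 x.
Proof. by move=> h /=; rewrite h. Qed.

Lemma within_le (r x : node) k k' : k <= k' -> within e r k x -> within e r k' x.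
Proof.
elim: k' => [|k' IH]; first by rewrite leqn0 => /eqP->.
rewrite leq_eqVlt => /orP[/eqP->//|]; rewrite ltnS => /IH h /h; apply: within_S.
Qed.

Lemma within_step (r x y : node) k : adj x y -> within e r k y -> within e r k.+1 x.
Proof. by move=> a w /=; apply/orP; right; apply/existsP; exists y; rewrite a w. Qed.

Lemma withinS_inv (r x : node) k : within e r k.+1 x ->
  within e r k x \/ exists y : node, adj x y /\ within e r k y.
Proof.
by case/orP=> [h|/existsP[y /andP[a w]]]; [left|right; exists y].
Qed.

Lemma within_path (x : node) p : path adj x p -> within e (last x p) (size p) x.
Proof.
elim: p x => [|c p IH] x /=; first by rewrite eqxx.
by case/andP=> a pth; apply: within_step a (IH c pth).
Qed.

Lemma adj_connect_sym (x y : node) : connect adj x y = connect adj y x.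
Proof. exact: (sym_connect_sym adj_sym). Qed.

Lemma blocks_share B1 B2 u : blockb e B1 -> blockb e B2 -> u \in B1 -> u \in B2 ->
  connect adj (inl B1) (inl B2).
Proof.
move=> b1 b2 u1 u2; case: (eqVneq B1 B2) => [->|neq]; first exact: connect0.
have cu := two_blocks_cut b1 b2 neq u1 u2.
apply: (connect_trans (y:=inr u)); apply: connect1; by rewrite /= ?b1 ?b2 cu.
Qed.

Lemma path_blocks a p : path (ind setT) a p -> forall B B', blockb e B -> a \in B ->
  blockb e B' -> last a p \in B' -> connect adj (inl B) (inl B').
Proof.
elim: p a => [|c p IH] a /=; first by move=> _ B B' b aB b' aB'; apply: blocks_share b b' aB aB'.
case/andP=> /and3P[eac _ _] pth B B' b aB b' lB'.
have [C [bC aC cC]] := edge_block eac.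
exact: connect_trans (blocks_share b bC aB aC) (IH c pth C B' bC cC b' lB').
Qed.

Lemma block_nonempty B : blockb e B -> exists a, a \in B.
Proof. by case/andP=> /andP[/andP[/set0Pn[a aB] _] _] _; exists a. Qed.

Lemma blocks_conn B1 B2 : blockb e B1 -> blockb e B2 -> connect adj (inl B1) (inl B2).
Proof.
move=> b1 b2; have [a aB] := block_nonempty b1; have [b bB] := block_nonempty b2.
case/andP: Gconn => _ /forallP/(_ a); rewrite in_setT /= => /forallP/(_ b).
rewrite in_setT /= => /connectP[p pth bE]; rewrite bE in bB.
exact (path_blocks pth b1 aB b2 bB).
Qed.

Lemma real_block n : real n -> exists B, blockb e B /\ connect adj n (inl B).
Proof.
case: n => [B|v] /= h; first by exists B; split=> //; apply: connect0.
have [B [bB sB]] := bic_block (bic1 v); exists B; split=> //.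
by apply: connect1; rewrite /= bB h (subsetP sB) // inE.
Qed.

Lemma tree_conn (x y : node) : real x -> real y -> connect adj x y.
Proof.
move=> rx ry; have [B [bB cB]] := real_block rx; have [B' [bB' cB']] := real_block ry.
apply: connect_trans cB _; apply: connect_trans (blocks_conn bB bB') _.
by rewrite adj_connect_sym.
Qed.

Lemma reach (r x : node) : real r -> real x -> within e r NN x.
Proof.
move=> rr rx; have /connectP[p0 pth0 ->] := tree_conn rx rr.
case: (shortenP pth0) => p pth up _.
apply: within_le (within_path pth).
have H := max_card (mem (x :: p)).
have E : #|mem (x :: p)| = size (x :: p) by apply/card_uniqP.
rewrite E /= in H; exact: ltnW H.
Qed.

Local Notation d r := (bt_dist e r).

Lemma dist_spec (r x : node) : within e r NN x ->
  within e r (d r x) x /\ (forall j, j < d r x -> ~~ within e r j x).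
Proof.
move=> hN; rewrite /bt_dist; set s := iota 0 NN.+1.
have hs : has (fun k => within e r k x) s by apply/hasP; exists NN => //; rewrite mem_iota add0n leq0n ltnSn.
have lt := hs; rewrite has_find size_iota in lt.
split.
  by have := nth_find 0 hs; rewrite nth_iota // add0n.
move=> j jlt; have := before_find 0 jlt; rewrite nth_iota ?add0n => [->//|].
exact: ltn_trans jlt lt.
Qed.

Lemma dist_le (r x : node) k : within e r NN x -> within e r k x -> d r x <= k.
Proof.
move=> hN hk; rewrite leqNgt; apply/negP=> lt.
by have := (dist_spec hN).2 _ lt; rewrite hk.
Qed.

Lemma exact_par (r : node) k (x : node) : within e r k x -> (k == 0) || ~~ within e r k.-1 x ->
  odd k = (side x != side r).
Proof.
elim: k x => [|k IH] x; first by move=> /= /eqP-> _; rewrite eqxx.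
move=> hw /= hmin; case: (withinS_inv hw) => [h|[y [a wy]]]; first by rewrite h in hmin.
have ey : (k == 0) || ~~ within e r k.-1 y.
  case: k {IH hw hmin wy} (hmin) => [//|k] hmin /=; apply/negP=> wy'.
  by rewrite (within_step a wy') in hmin.
rewrite (IH y wy ey); have := adj_side a.
by case: (side x); case: (side y); case: (side r).
Qed.

Lemma dist_par (r x : node) : within e r NN x -> odd (d r x) = (side x != side r).
Proof.
move=> hN; have [h1 h2] := dist_spec hN; apply: exact_par h1 _.
case: (d r x) h2 => [//|k] h2 /=; exact: h2.
Qed.

Lemma dist_adj (r x y : node) : real r -> adj x y -> d r x = (d r y).+1 \/ d r y = (d r x).+1.
Proof.
move=> rr a; have [rx ry] := adj_real a.
have hx := reach rr rx; have hy := reach rr ry.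
have l1 := dist_le hx (within_step a (dist_spec hy).1).
have a' : adj y x by rewrite adj_sym.
have l2 := dist_le hy (within_step a' (dist_spec hx).1).
have px := dist_par hx; have py := dist_par hy.
have ne : d r x != d r y.
  apply/eqP=> E; rewrite E py in px; have := adj_side a.
  by move: px; case: (side x); case: (side y); case: (side r).
exact: nat_a l1 l2 ne.
Qed.

Lemma dist0 (r x : node) : within e r NN x -> d r x = 0 -> x = r.
Proof. by move=> hN E; have := (dist_spec hN).1; rewrite E /= => /eqP. Qed.

Lemma dist_root (r : node) : d r r = 0.
Proof.
apply/eqP; rewrite -leqn0; apply: (@dist_le r r 0); last by rewrite /= eqxx.
by apply: (@within_le r r 0); rewrite /= ?eqxx.
Qed.

Lemma descend (r x : node) k : real r -> real x -> d r x = k.+1 ->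
  exists y : node, adj x y /\ d r y = k.
Proof.
move=> rr rx E; have hx := reach rr rx; have [w1 w2] := dist_spec hx.
have nw : ~~ within e r k x by apply: w2; rewrite E.
rewrite E in w1.
case: (withinS_inv w1) => [h|[y [a wy]]]; first by rewrite h in nw.
exists y; split=> //; have [_ ry] := adj_real a.
have l := dist_le (reach rr ry) wy.
case: (dist_adj rr a) => E'; first by move: E'; rewrite E => -[].
by rewrite E' E in l; case: (nat_b l).
Qed.

Lemma vs_conn (y : node) v a c : real y -> a \in vs y -> c \in vs y -> a != v -> c != v ->
  conn (setT :\ v) a c.
Proof.
case: y => [B|u] /= ry aB cB av cv.
  exact (conn_sub (setSD _ (subsetT B)) (bic_minus (block_bic ry) aB cB av cv)).
by move: aB cB; rewrite !inE => /eqP-> /eqP->; apply: connect0.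
Qed.

Lemma Ldesc (r : node) v : real r -> forall k (y : node), within e r k y ->
  ~~ within e r k (inr v) -> forall a b, a \in vs y -> a != v -> b \in vs r -> b != v ->
  conn (setT :\ v) a b.
Proof.
move=> rr; elim=> [|k IH] y.
  by move=> /= /eqP-> _ a b aB av bB bv; apply: vs_conn rr aB bB av bv.
move=> hy hv; have hv' : ~~ within e r k (inr v) by apply: contra hv; apply: within_S.
case: (withinS_inv hy) => [h|[z [a wz]]]; first exact: IH h hv'.
move=> x b xy xv bB bv.
case: y z a wz hy xy => [B|u] [B'|u'] //= /and3P[bl cu uB] wz hy xy.
  have uv : u' != v by apply/eqP=> E; rewrite E in wz; by rewrite wz in hv'.
  apply: connect_trans (vs_conn (y:=inl B) bl xy uB xv uv) _.
  by apply: (IH (inr u')) => //; rewrite inE.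
have uv : u != v by apply/eqP=> E; move: hv; rewrite -E => /negP; apply.
by move: xy; rewrite inE => /eqP->; apply: (IH (inl B')).
Qed.

Lemma root_other (r : node) v : real r -> r != inr v -> exists b, b \in vs r /\ b != v.
Proof.
case: r => [B|u] /= rr ne; first exact: block_other rr.
by exists u; rewrite inE eqxx; split=> //; apply: contra ne => /eqP->.
Qed.

Lemma uparent (r : node) k (x p1 p2 : node) : real r -> within e r k p1 -> within e r k p2 ->
  ~~ within e r k x -> adj x p1 -> adj x p2 -> p1 = p2.
Proof.
move=> rr w1 w2 nx a1 a2.
case: x nx a1 a2 => [B|v] nx; case: p1 w1 => [B1|u1] w1 //; case: p2 w2 => [B2|u2] w2 // a1 a2.
  case: k w1 w2 nx => [|k] w1 w2 nx; first by move: w1 w2 => /= /eqP-> /eqP->.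
  case: (eqVneq u1 u2) => [->//|neq]; exfalso.
  have n1 : ~~ within e r k (inr u1).
    by apply/negP=> h; rewrite (within_step a1 h) in nx.
  have n2 : ~~ within e r k (inr u2).
    by apply/negP=> h; rewrite (within_step a2 h) in nx.
  case/and3P: (a1) => blB cu1 u1B; case/and3P: (a2) => _ cu2 u2B.
  case: (withinS_inv w1) => [h|[z1 [b1 wz1]]]; first by rewrite h in n1.
  case: (withinS_inv w2) => [h|[z2 [b2 wz2]]]; first by rewrite h in n2.
  case: z1 b1 wz1 => [P1|?] //= /and3P[blP1 _ u1P1] wz1.
  case: z2 b2 wz2 => [P|?] //= /and3P[blP _ u2P] wz2.
  have neP : B != P1.
    by apply/eqP=> E; rewrite -E in wz1; rewrite (within_S wz1) in nx.
  have rne : r != inr u1.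
    apply/eqP=> E; move: n1; rewrite -E.
    by rewrite (@within_le r r 0) //= eqxx.
  have [b [bR bv]] := root_other rr rne.
  have [a [aP1 av]] := block_other u1 blP1.
  have c1 := Ldesc rr wz1 n1 (a:=a) (y:=inl P1) aP1 av bR bv.
  have neq' : u2 != u1 by rewrite eq_sym.
  have c2 := Ldesc rr wz2 n1 (a:=u2) (y:=inl P) u2P (neq' ) bR bv.
  have := sep blB blP1 neP u1B u1P1 u2B aP1 neq' av.
  by rewrite (connect_trans c2 _) // conn_symE.
case: (eqVneq B1 B2) => [->//|neq]; exfalso.
case/and3P: (a1) => bl1 cv vB1; case/and3P: (a2) => bl2 _ vB2.
have rne : r != inr v.
  apply/eqP=> E; move: nx; rewrite -E.
  by rewrite (@within_le r r 0) //= eqxx.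
have [b [bR bv]] := root_other rr rne.
have [a [aB1 av]] := block_other v bl1.
have [a' [aB2 av']] := block_other v bl2.
have c1 := Ldesc rr w1 nx (a:=a) (y:=inl B1) aB1 av bR bv.
have c2 := Ldesc rr w2 nx (a:=a') (y:=inl B2) aB2 av' bR bv.
have := sep bl1 bl2 neq vB1 vB2 aB1 aB2 av av'.
by rewrite (connect_trans c1 _) // conn_symE.
Qed.


Definition parent (r : node) (B : {set T}) : option T :=
  [pick v | cut_vertexb e setT v && rooted_arc e r (inl B) (inr v)].

Definition Dsel (r : node) (Dr : rel T) (B : {set T}) : rel T :=
  match parent r B with
  | Some v => epsilon (inhabits (fun _ _ => false))
       (fun D => [/\ orientation_of e B D, one_perfect e D & forall y, ~~ D v y])
  | None => Dr
  end.

Definition Dglue (r : node) (Dr : rel T) : rel T := fun x y =>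
  [exists B, [&& blockb e B, x \in B, y \in B & Dsel r Dr B x y]].

Lemma parent_none (r : node) B : real r -> blockb e B -> parent r B = None -> r = inl B.
Proof.
move=> rr bl; rewrite /parent; case: pickP => // H _.
have rB : real (inl B) := bl.
case E: (d r (inl B)) => [|k]; first by rewrite (dist0 (reach rr rB) E).
have [y [a dy]] := descend rr rB E.
case: y a dy => [?|v] // a dy; case/and3P: (a) => _ cv vB.
have ra : rooted_arc e r (inl B) (inr v) by rewrite /rooted_arc a dy E ltnSn.
by move: (H v); rewrite cv ra.
Qed.

Lemma Dsel_spec (r : node) Dr B : real r ->
  (forall Br, r = inl Br -> orientation_of e Br Dr /\ one_perfect e Dr) ->
  (forall B v, blockb e B -> cut_vertexb e setT v -> rooted_arc e r (inl B) (inr v) ->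
     rooted_one_perfectly_orientable e B v) ->
  blockb e B ->
  [/\ orientation_of e B (Dsel r Dr B), one_perfect e (Dsel r Dr B) &
      forall v, parent r B = Some v -> forall y, ~~ Dsel r Dr B v y].
Proof.
move=> rr HDr Hroot bl.
have Hv : forall v, parent r B = Some v ->
    cut_vertexb e setT v && rooted_arc e r (inl B) (inr v).
  by move=> v; rewrite /parent; case: pickP => // v' H [<-].
rewrite /Dsel; case E: (parent r B) => [v|].
  case/andP: (Hv v E) => cv ra.
  have := epsilon_spec (inhabits (fun _ _ : T => false)) _ (Hroot B v bl cv ra).
  case=> o p s; split=> // v' [<-]; exact: s.
have [o p] := HDr B (parent_none rr bl E).
by split.
Qed.

Lemma Dglue_eq (r : node) Dr B0 x y : blockb e B0 -> x \in B0 -> y \in B0 -> x != y ->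
  Dglue r Dr x y = Dsel r Dr B0 x y.
Proof.
move=> b0 x0 y0 xy; apply/existsP/idP => [[B /and4P[bl xB yB D]]|D].
  by rewrite -(share2 bl b0 xB x0 yB y0 xy).
by exists B0; rewrite b0 x0 y0 D.
Qed.

Lemma suff_dir (r : node) Dr : real r ->
  (forall Br, r = inl Br -> orientation_of e Br Dr /\ one_perfect e Dr) ->
  (forall B v, blockb e B -> cut_vertexb e setT v -> rooted_arc e r (inl B) (inr v) ->
     rooted_one_perfectly_orientable e B v) ->
  one_perfectly_orientable_on e setT.
Proof.
move=> rr HDr Hroot.
have Sp := fun B => Dsel_spec (Dr:=Dr) (B:=B) rr HDr Hroot.
exists (Dglue r Dr); split; first split.
- move=> x y /existsP[B /and4P[bl xB yB D]].
  have [[o1 _] _ _] := Sp B bl.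
  by case/and3P: (o1 x y D) => exy _ _; rewrite /induced /= exy !in_setT.
- move=> x y /and3P[exy _ _].
  have [B0 [b0 xB yB]] := edge_block exy.
  have xy : x != y by apply/eqP=> E; rewrite E e_irr in exy.
  rewrite (Dglue_eq _ _ b0 xB yB xy) (Dglue_eq _ _ b0 yB xB _); last by rewrite eq_sym.
  have [[_ o2] _ _] := Sp B0 b0.
  by apply: o2; rewrite /induced /= exy xB yB.
move=> x y z /existsP[B1 /and4P[bl1 xB1 yB1 D1]] /existsP[B2 /and4P[bl2 xB2 zB2 D2]] yz.
case: (eqVneq B1 B2) => [E|neq].
  by rewrite -E in D2; have [_ p _] := Sp B1 bl1; apply: p D1 D2 yz.
exfalso.
have cx := two_blocks_cut bl1 bl2 neq xB1 xB2.
have key : forall B y, blockb e B -> x \in B -> Dsel r Dr B x y ->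
    d r (inr x) = (d r (inl B)).+1.
  move=> B w bl xB Dw.
  have a : adj (inr x) (inl B) by rewrite /bt_adj bl cx xB.
  have ax : adj (inl B) (inr x) by rewrite adj_sym.
  case: (dist_adj rr a) => // E; exfalso.
  have [_ _ s] := Sp B bl.
  have rx : real (inr x) := cx.
  have rB : real (inl B) := bl.
  move: s; rewrite /parent; case: pickP => [w' /andP[cw raw] s|H].
    case: (eqVneq w' x) => [ew|nw]; first by move: (s w' erefl w); rewrite ew Dw.
    case/andP: raw => a' lt.
    have [_ rw'] := adj_real a'.
    have Ew : d r (inr w') = d r (inr x).
      case: (dist_adj rr a') => E'; first by move: E'; rewrite E => -[].
      by rewrite E' in lt; case: (nat_b lt).
    have hw := (dist_spec (reach rr rw')).1; rewrite Ew in hw.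
    have hx := (dist_spec (reach rr rx)).1.
    have nB : ~~ within e r (d r (inr x)) (inl B).
      by apply: (dist_spec (reach rr rB)).2; rewrite E.
    have := uparent rr hw hx nB a' ax; case=> ew.
    by rewrite ew eqxx in nw.
  have ra : rooted_arc e r (inl B) (inr x) by rewrite /rooted_arc ax E ltnSn.
  by move: (H x); rewrite cx ra.
have E1 := key B1 y bl1 xB1 D1; have E2 := key B2 z bl2 xB2 D2.
have rx : real (inr x) := cx.
have r1 : real (inl B1) := bl1.
have r2 : real (inl B2) := bl2.
have h1 := (dist_spec (reach rr r1)).1.
have h2 := (dist_spec (reach rr r2)).1.
have E12 : d r (inl B2) = d r (inl B1) by move: E1; rewrite E2; case.
rewrite E12 in h2.
have nx : ~~ within e r (d r (inl B1)) (inr x) by apply: (dist_spec (reach rr rx)).2; rewrite E1.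
have a1 : adj (inr x) (inl B1) by rewrite /bt_adj bl1 cx xB1.
have a2 : adj (inr x) (inl B2) by rewrite /bt_adj bl2 cx xB2.
case: (uparent rr h1 h2 nx a1 a2) => E.
by rewrite E eqxx in neq.
Qed.


Fixpoint wi (R : rel T) (s : T) (k : nat) (x : T) : bool :=
  match k with
  | 0 => x == s
  | k'.+1 => wi R s k' x || [exists y, R x y && wi R s k' y]
  end.

Lemma wi_S (R : rel T) s k x : wi R s k x -> wi R s k.+1 x.
Proof. by move=> h /=; rewrite h. Qed.

Lemma wi_step (R : rel T) s k x y : R x y -> wi R s k y -> wi R s k.+1 x.
Proof. by move=> a w /=; apply/orP; right; apply/existsP; exists y; rewrite a w. Qed.

Lemma wi_path (R : rel T) x p : path R x p -> wi R (last x p) (size p) x.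
Proof.
elim: p x => [|c p IH] x /=; first by rewrite eqxx.
by case/andP=> a pth; apply: wi_step a (IH c pth).
Qed.

Variable D : rel T.
Hypothesis HD : orientation_of e setT D.
Hypothesis HP : one_perfect e D.

Lemma D_edge x y : D x y -> e x y.
Proof. by move=> h; case/and3P: (HD.1 x y h). Qed.

Lemma D_or x y : e x y -> D x y != D y x.
Proof. by move=> exy; apply: HD.2; rewrite /induced /= exy !in_setT. Qed.

Lemma sink_unique B u1 u2 : blockb e B -> u1 \in B -> u2 \in B ->
  (forall y, y \in B -> ~~ D u1 y) -> (forall y, y \in B -> ~~ D u2 y) -> u1 = u2.
Proof.
move=> bl u1B u2B s1 s2.
set R := ind B.
have claim : forall k u, wi R u1 k.+1 u -> ~~ wi R u1 k u ->
    exists w, [/\ w \in B, D u w & wi R u1 k w].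
  elim=> [|k IH] u h nh.
    case/orP: h => [h|/existsP[y /andP[Ruy /eqP ey]]]; first by move: nh; rewrite /= h.
    rewrite ey in Ruy; case/and3P: Ruy => eus uB sB.
    exists u1; split=> //; last by rewrite /= eqxx.
    have := D_or eus; rewrite (negbTE (s1 u uB)); by case: (D u u1).
  case/orP: h => [h|/existsP[y /andP[Ruy wy]]]; first by exfalso; exact (negP nh h).
  have ny : ~~ wi R u1 k y.
    by apply/negP=> h; rewrite (wi_step Ruy h) in nh.
  have [w' [w'B Dyw' ww']] := IH y wy ny.
  case/and3P: (Ruy) => euy uB yB.
  have nDyu : ~~ D y u.
    apply/negP=> Dyu.
    have uw : u != w' by apply/eqP=> E; rewrite -E in ww'; rewrite (wi_S ww') in nh.
    have euw := HP Dyu Dyw' uw.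
    have Ruw : R u w' by rewrite /R /induced /= euw uB w'B.
    by rewrite (wi_step Ruw ww') in nh.
  exists y; split=> //.
  by have := D_or euy; rewrite (negbTE nDyu); case: (D u y).
apply/eqP/negPn/negP=> ne.
have /connectP[p pth E] := bic_conn (block_bic bl) u2B u1B.
have hw := wi_path pth; rewrite -E in hw.
have ex : exists n, wi R u1 n u2 by exists (size p).
case: (ex_minnP ex) => m hm hmin.
case: m hm hmin => [|k] hm hmin.
  by move: hm => /= /eqP E'; rewrite E' eqxx in ne.
have nk : ~~ wi R u1 k u2.
  by apply/negP=> h; have := hmin k h; rewrite ltnn.
have [w [wB Dw _]] := claim k u2 hm nk.
by rewrite (negbTE (s2 w wB)) in Dw.
Qed.

Definition ob v B := [exists y, (y \in B) && D v y].

Definition arc (a b : node) : bool :=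
  adj a b && match a, b with
             | inr v, inl B => ob v B
             | inl B, inr v => ~~ ob v B
             | _, _ => false
             end.

Lemma arc_adj (a b : node) : arc a b -> adj a b.
Proof. by case/andP. Qed.

Lemma arc_flip (a b : node) : adj a b -> arc a b = ~~ arc b a.
Proof.
case: a b => [B|v] [B'|v'] // h; rewrite /arc h adj_sym h //=; by rewrite negbK.
Qed.

Lemma arc_out (a b1 b2 : node) : arc a b1 -> arc a b2 -> b1 = b2.
Proof.
case: a => [B|v]; case: b1 => [B1|u1] //; case: b2 => [B2|u2] //.
  move=> /andP[a1 n1] /andP[a2 n2]; case/and3P: a1 => bl _ u1B; case/and3P: a2 => _ _ u2B.
  congr inr; apply: (sink_unique bl u1B u2B) => y yB; apply/negP=> Dy.
    by move: n1; rewrite /ob negb_exists => /forallP/(_ y); rewrite yB Dy.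
  by move: n2; rewrite /ob negb_exists => /forallP/(_ y); rewrite yB Dy.
move=> /andP[a1 /existsP[y1 /andP[y1B D1]]] /andP[a2 /existsP[y2 /andP[y2B D2]]].
case/and3P: a1 => bl1 _ vB1; case/and3P: a2 => bl2 _ vB2.
case: (eqVneq B1 B2) => [->//|neq]; exfalso.
have y1v : y1 != v by apply/eqP=> E; move: (D_edge D1); rewrite E e_irr.
have y2v : y2 != v by apply/eqP=> E; move: (D_edge D2); rewrite E e_irr.
have := sep bl1 bl2 neq vB1 vB2 y1B y2B y1v y2v.
case: (eqVneq y1 y2) => [->|ne]; first by rewrite connect0.
by rewrite (conn_edge (HP D1 D2 ne)) // in_setD1 ?y1v ?y2v in_setT.
Qed.

Variable v0 : T.
Hypothesis cv0 : cut_vertexb e setT v0.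

Lemma root_exists : exists r : node, real r /\ forall b : node, ~~ arc r b.
Proof.
case: (pickP (fun r : node => real r && [forall b : node, ~~ arc r b])) => [r /andP[rr /forallP H]|H].
  by exists r.
exfalso.
have out : forall r : node, real r -> exists b : node, arc r b.
  move=> r rr; move: (H r); rewrite rr /= => /negbT; rewrite negb_forall => /existsP[nb]; rewrite negbK.
  by exists nb.
set r0 : node := inr v0.
have rr0 : real r0 := cv0.
have claim : forall n, exists x c : node,
    [/\ real x, arc x c, d r0 c = (d r0 x).+1 & n <= d r0 x].
  elim=> [|n [x [c [rx axc dc le]]]].
    have [c ac] := out r0 rr0; exists r0, c; split=> //.
    case: (dist_adj rr0 (arc_adj ac)) => E; last by [].
    by move: E; rewrite dist_root.
  have [_ rc] := adj_real (arc_adj axc).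
  have [c' ac'] := out c rc.
  case: (dist_adj rr0 (arc_adj ac')) => E; last first.
    by exists c, c'; split=> //; rewrite dc.
  exfalso.
  have hx := (dist_spec (reach rr0 rx)).1.
  have [_ rc'] := adj_real (arc_adj ac').
  have hc' := (dist_spec (reach rr0 rc')).1.
  have Ec : d r0 c' = d r0 x by move: E; rewrite dc => -[].
  rewrite Ec in hc'.
  have nc : ~~ within e r0 (d r0 x) c.
    by apply: (dist_spec (reach rr0 rc)).2; rewrite dc.
  have acx : adj c x by rewrite adj_sym (arc_adj axc).
  have := uparent rr0 hx hc' nc acx (arc_adj ac') => Ex.
  rewrite -Ex in ac'.
  by move: ac'; rewrite (arc_flip acx) axc.
have [x [c [rx _ _ le]]] := claim NN.+1.
have := dist_le (reach rr0 rx) (reach rr0 rx).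
by move=> le'; have := leq_trans le le'; rewrite ltnn.
Qed.

Lemma toward (r : node) : real r -> (forall b : node, ~~ arc r b) ->
  forall k (x p : node), adj x p -> d r p = k -> d r x = k.+1 -> arc x p.
Proof.
move=> rr nor; elim=> [|k IH] x p a dp dx.
  have [_ rp] := adj_real a.
  have E := dist0 (reach rr rp) dp; rewrite E in a *.
  by rewrite (arc_flip a) nor.
have [_ rp] := adj_real a.
have [q [apq dq]] := descend rr rp dp.
have aq := IH p q apq dq dp.
rewrite (arc_flip a); apply/negP=> apx.
have Eq := arc_out aq apx.
by move: dx; rewrite -Eq dq => /nat_c.
Qed.

Definition restr B : rel T := fun x y => [&& D x y, x \in B & y \in B].

Lemma restr_ok B : orientation_of e B (restr B) /\ one_perfect e (restr B).
Proof.
split; first split.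
- by move=> x y /and3P[Dxy xB yB]; rewrite /induced /= (D_edge Dxy) xB yB.
- move=> x y /and3P[exy xB yB]; rewrite /restr xB yB !andbT; exact: D_or.
move=> x y z /and3P[D1 _ _] /and3P[D2 _ _] yz; exact: (HP D1 D2 yz).
Qed.

Lemma nec_dir :
  (exists Br : {set T},
      [/\ blockb e Br, one_perfectly_orientable_on e Br &
        forall (B : {set T}) (v : T),
          blockb e B -> cut_vertexb e setT v ->
          rooted_arc e (inl Br) (inl B) (inr v) ->
          rooted_one_perfectly_orientable e B v]) \/
   (exists vr : T,
      cut_vertexb e setT vr /\
        forall (B : {set T}) (v : T),
          blockb e B -> cut_vertexb e setT v ->
          rooted_arc e (inr vr) (inl B) (inr v) ->
          rooted_one_perfectly_orientable e B v).
Proof.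
have [r [rr nor]] := root_exists.
have Hr : forall (B : {set T}) (v : T), blockb e B -> cut_vertexb e setT v ->
    rooted_arc e r (inl B) (inr v) -> rooted_one_perfectly_orientable e B v.
  move=> B v bl cv /andP[a lt].
  have E : d r (inl B) = (d r (inr v)).+1.
    case: (dist_adj rr a) => // E; by rewrite E in lt; case: (nat_b lt).
  have := toward rr nor a erefl E.
  move=> /andP[_ nob].
  have [o p] := restr_ok B.
  exists (restr B); split=> // y; apply/negP=> /and3P[Dvy _ yB].
  by move: nob; rewrite /ob negb_exists => /forallP/(_ y); rewrite yB Dvy.
case: r rr nor Hr => [Br|vr] rr nor Hr.
  left; exists Br; split=> //; exists (restr Br); exact: restr_ok.
by right; exists vr.
Qed.

End Main.

Theorem theorem3p2 (T : finType) (e : rel T)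
  (e_sym : symmetric e) (e_irr : irreflexive e)
  (G_conn : connectedb e setT)
  (G_cut : exists v : T, cut_vertexb e setT v) :
  one_perfectly_orientable_on e setT <->
  ((exists Br : {set T},
      [/\ blockb e Br, one_perfectly_orientable_on e Br &
        forall (B : {set T}) (v : T),
          blockb e B -> cut_vertexb e setT v ->
          rooted_arc e (inl Br) (inl B) (inr v) ->
          rooted_one_perfectly_orientable e B v]) \/
   (exists vr : T,
      cut_vertexb e setT vr /\
        forall (B : {set T}) (v : T),
          blockb e B -> cut_vertexb e setT v ->
          rooted_arc e (inr vr) (inl B) (inr v) ->
          rooted_one_perfectly_orientable e B v)).
Proof.
have [v0 cv0] := G_cut.
have nbr : forall x, exists y, e x y.
  move=> x; case/andP: (cv0) => _ /existsP[a /andP[aS _]].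
  rewrite in_setD1 in aS; case/andP: aS => av0 _.
  have [w xw] : exists w, w != x.
    case: (eqVneq a x) => [E|ne]; last by exists a.
    by exists v0; rewrite -E eq_sym.
  case/andP: G_conn => _ /forallP/(_ x); rewrite in_setT => /forallP/(_ w).
  rewrite in_setT /= => /connectP[[|c p] /= pth E]; first by rewrite E eqxx in xw.
  by case/andP: pth => /and3P[exc _ _] _; exists c.
split.
  by case=> D [HD HP]; exact: (nec_dir e_sym e_irr nbr G_conn HD HP cv0).
case=> [[Br [bl [Dr [o p]] H]]|[vr [cv H]]].
  apply: (suff_dir e_sym e_irr nbr G_conn (r:=inl Br) (Dr:=Dr)) => //.
  by move=> Br' [<-]; split.
by apply: (suff_dir e_sym e_irr nbr G_conn (r:=inr vr) (Dr:=fun _ _ => false)).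
Qed.
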